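(* Let $m\ge1$, let $\mathcal{I}\subseteq\mathcal{M}_m$ be a decreasing monomial set with $r=\max_{f\in\mathcal{I}}\deg(f)$, and let $f,g\in\mathcal{I}_r$ with $h=\gcd(f,g)$ such that $\deg(h)=r-2$. Then \[ \Big|{\rm LTA}(m,2)_h\cdot h\cdot\Big({\rm LTA}(m,2)_{f} \cdot \tfrac{f}{h}+{\rm LTA}(m,2)_{g}\cdot \tfrac{g}{h}\Big)\Big|= |{\rm LTA}(m,2)_h\cdot h|\cdot \Big|{\rm LTA}(m,2)_{f} \cdot \tfrac{f}{h}+{\rm LTA}(m,2)_{g}\cdot \tfrac{g}{h}\Big|. \]
   Context: $\mathbf{R}_m=\mathbb{F}_2[x_0,\dots,x_{m-1}]/(x_0^2-x_0,\dots,x_{m-1}^2-x_{m-1})$. $\mathcal{M}_m$ is the set of monomials $x_0^{i_0}\cdots x_{m-1}^{i_{m-1}}$, $i_j\in\{0,1\}$. For a monomial $f$, $\operatorname{ind}(f)$ is the set of indices of variables dividing $f$, $\deg f=|\operatorname{ind}(f)|$; $\gcd(f,g)$ has $\operatorname{ind}=\operatorname{ind}(f)\cap\operatorname{ind}(g)$; for $h\mid f$, $f/h$ has $\operatorname{ind}=\operatorname{ind}(f)\setminus\operatorname{ind}(h)$. Order: $f\preceq_w g$ iff $\operatorname{ind}(f)\subseteq\operatorname{ind}(g)$; for equal-degree $f=x_{i_1}\cdots x_{i_s}$, $g=x_{j_1}\cdots x_{j_s}$ (increasing indices), $f\preceq_{sh}g$ iff $i_\ell\le j_\ell$ for all $\ell$;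 $f\preceq g$ iff $f\preceq_{sh}g^*\preceq_w g$ for some $g^*$. $\mathcal{I}$ is decreasing if $f\in\mathcal{I}$, $g\preceq f$ imply $g\in\mathcal{I}$; $\mathcal{I}_r=\{f\in\mathcal{I}:\deg f=r\}$. ${\rm LTA}(m,2)$ is the set of pairs $(\mathbf{B},\varepsilon)$ with $\mathbf{B}=(b_{i,j})\in\mathbb{F}_2^{m\times m}$ lower triangular with ones on the diagonal and $\varepsilon\in\mathbb{F}_2^m$; for a monomial $u$, $(\mathbf{B},\varepsilon)\cdot u\in\mathbf{R}_m$ replaces each variable $x_i$ of $u$ by $x_i+\sum_{j<i}b_{i,j}x_j+\varepsilon_i$. For a monomial $g$, ${\rm LTA}(m,2)_g$ is the set of $(\mathbf{B},\varepsilon)\in{\rm LTA}(m,2)$ with $\varepsilon_i=0$ for $i\notin\operatorname{ind}(g)$ and $b_{i,j}=0$ (for $j<i$) whenever $i\notin\operatorname{ind}(g)$ or $j\in\operatorname{ind}(g)$. For $G\subseteq{\rm LTA}(m,2)$ and monomial $u$, $G\cdot u=\{(\mathbf{B},\varepsilon)\cdot u:(\mathbf{B},\varepsilon)\in G\}$. For sets $\mathcal{S},\mathcal{T}\subseteq\mathbf{R}_m$: $\mathcal{S}+\mathcal{T}=\{s+t\}$, $\mathcal{S}\cdot\mathcal{T}=\{st\}$; $G\cdot h\cdot(\mathcal{S})$ is the product of the set $G\cdot h$ with the set $\mathcal{S}$. *)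

(* Defs.v *)
From mathcomp Require Import all_boot all_algebra.
Set Implicit Arguments. Unset Strict Implicit. Unset Printing Implicit Defensive.

(* ---------- The ring R_m = F_2[x_0..x_{m-1}]/(x_i^2 - x_i) ----------
   A monomial x_{i_1}...x_{i_s} is identified with its index set ind(f) : {set 'I_m}.
   An element of R_m is written in the canonical (multilinear) basis of monomials,
   i.e. as the set of monomials carrying coefficient 1 in F_2. *)

Definition mono (m : nat) := {set 'I_m}.
Definition Rm (m : nat) := {set {set 'I_m}}.

Section Ring.
Variable m : nat.
Implicit Types p q : Rm m.

Definition radd p q : Rm m := (p :\: q) :|: (q :\: p).
Definition rzero : Rm m := set0.
Definition rone : Rm m := [set set0].
Definition rvar (i : 'I_m) : Rm m := [set [set i]].
(* multiplication: x_A * x_B = x_{A u B} (since x_i^2 = x_i), extended bilinearly *)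
Definition rmul p q : Rm m :=
  \big[radd/rzero]_(a in p) \big[radd/rzero]_(b in q) [set a :|: b].

Definition rmono (u : mono m) : Rm m := [set u].

Definition mdeg (f : mono m) : nat := #|f|.
Definition mgcd (f g : mono m) : mono m := f :&: g.
Definition mdiv (f h : mono m) : mono m := f :\: h.

Definition idxs (f : mono m) : seq nat := sort leq [seq val i | i <- enum f].
Definition le_w (f g : mono m) : bool := f \subset g.
Definition le_sh (f g : mono m) : bool :=
  (#|f| == #|g|) &&
  all (fun l => nth 0%N (idxs f) l <= nth 0%N (idxs g) l) (iota 0 #|f|).
Definition mle (f g : mono m) : bool := [exists gs : mono m, le_sh f gs && le_w gs g].

Definition decreasing (I : {set mono m}) : Prop :=
  forall f g : mono m, f \in I -> mle g f -> g \in I.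

Definition lta := ('M[bool]_m * {ffun 'I_m -> bool})%type.

Definition is_lta (a : lta) : bool :=
  [forall i : 'I_m, (a.1 i i == true) &&
     [forall j : 'I_m, (i < j)%N ==> (a.1 i j == false)]].

Definition LTA : {set lta} := [set a | is_lta a].

Definition LTA_g (g : mono m) : {set lta} :=
  [set a in LTA |
    [forall i : 'I_m, (i \notin g) ==> (a.2 i == false)] &&
    [forall i : 'I_m, forall j : 'I_m,
       ((j < i)%N && ((i \notin g) || (j \in g))) ==> (a.1 i j == false)]].

Definition act_var (a : lta) (i : 'I_m) : Rm m :=
  radd (radd (rvar i)
             (\big[radd/rzero]_(j : 'I_m | (j < i)%N && a.1 i j) rvar j))
       (if a.2 i then rone else rzero).

Definition act (a : lta) (u : mono m) : Rm m :=
  \big[rmul/rone]_(i in u) act_var a i.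

Definition actS (G : {set lta}) (u : mono m) : {set Rm m} := [set act a u | a in G].
Definition addS (S T : {set Rm m}) : {set Rm m} := [set radd s t | s in S, t in T].
Definition mulS (S T : {set Rm m}) : {set Rm m} := [set rmul s t | s in S, t in T].

End Ring.

(* Main.v *)
Require Import Defs.
From mathcomp Require Import all_boot all_algebra.
Set Implicit Arguments. Unset Strict Implicit. Unset Printing Implicit Defensive.

Definition ev {m : nat} (p : Rm m) (x : {set 'I_m}) : bool :=
  \big[addb/false]_(u in p) (u \subset x).

Lemma ev_radd m (p q : Rm m) x : ev (radd p q) x = ev p x (+) ev q x.
Proof.
rewrite /ev (big_setID p).
have -> : radd p q :&: p = p :\: q.
  by apply/setP => u; rewrite /radd !inE; case: (u \in p); case: (u \in q).
have -> : radd p q :\: p = q :\: p.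
  by apply/setP => u; rewrite /radd !inE; case: (u \in p); case: (u \in q).
rewrite [X in _ = X (+) _](big_setID q) [X in _ = _ (+) X](big_setID p) (setIC q p).
set X := \big[addb/false]_(i in p :&: q) _.
set Y := \big[addb/false]_(i in p :\: q) _.
set Z := \big[addb/false]_(i in q :\: p) _.
by case: X; case: Y; case: Z.
Qed.

Lemma ev_rzero m x : ev (rzero m) x = false.
Proof. by rewrite /ev /rzero big_set0. Qed.

Lemma ev_rone m x : ev (rone m) x = true.
Proof. by rewrite /ev /rone big_set1 sub0set. Qed.

Lemma ev_rvar m (i : 'I_m) x : ev (rvar i) x = (i \in x).
Proof. by rewrite /ev /rvar big_set1 sub1set. Qed.

Lemma ev_rmul m (p q : Rm m) x : ev (rmul p q) x = ev p x && ev q x.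
Proof.
have hm : {morph (fun p => ev p x) : p q / radd p q >-> addb p q}.
  by move=> p1 q1; apply: ev_radd.
rewrite /rmul (big_morph (fun p => ev p x) hm (@ev_rzero m x)).
under eq_bigr => a _.
  rewrite (big_morph (fun p => ev p x) hm (@ev_rzero m x)).
  under eq_bigr => b _ do rewrite /ev big_set1 subUset.
  rewrite -(big_endo (andb (a \subset x)) (andb_addr _) (andbF _)).
  over.
by rewrite -(big_endo (andb^~ (ev q x)) (fun u v => andb_addl u v _) (andFb _)).
Qed.

Lemma ev0 m (p : Rm m) : (forall x, ev p x = false) -> p = set0.
Proof.
move=> H; apply/eqP; apply/negPn/negP => /set0Pn [u0 Hu0].
case: (arg_minnP (fun v : {set 'I_m} => #|v|) Hu0) => u Hu Hmin.
have := H u; rewrite /ev (bigD1 u) //= subxx big1 //.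
move=> v /andP[vp vu]; apply/negbTE/negP => sub.
have := Hmin v vp => le.
by move: vu; rewrite eqEcard sub le.
Qed.

Lemma ev_inj m (p q : Rm m) : (forall x, ev p x = ev q x) -> p = q.
Proof.
move=> H; have E : radd p q = set0.
  by apply: ev0 => x; rewrite ev_radd H addbb.
apply/setP => u; move/setP: E => /(_ u); rewrite /radd !inE.
by case: (u \in p); case: (u \in q).
Qed.

Definition phi m (R : 'I_m -> 'I_m -> bool) (e : 'I_m -> bool) (i : 'I_m)
  (x : {set 'I_m}) : bool :=
  \big[addb/false]_(j : 'I_m | (j < i)%N && R i j) (j \in x) (+) e i.

Definition Lf m R e (i : 'I_m) (x : {set 'I_m}) : bool := (i \in x) (+) phi R e i x.

Definition Ra m (a : lta m) := fun i j => a.1 i j.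
Definition Ea m (a : lta m) := fun i => a.2 i.

Lemma ev_act_var m (a : lta m) i x :
  ev (act_var a i) x = Lf (Ra a) (Ea a) i x.
Proof.
have hm : {morph (fun p => ev p x) : p q / radd p q >-> addb p q}.
  by move=> p1 q1; apply: ev_radd.
rewrite /act_var /Lf /phi !ev_radd ev_rvar (big_morph (fun p => ev p x) hm (@ev_rzero m x)).
under eq_bigr do rewrite ev_rvar.
rewrite /Ra /Ea addbA.
by case: (a.2 i); rewrite ?ev_rone ?ev_rzero.
Qed.

Lemma ev_act m (a : lta m) u x :
  ev (act a u) x = \big[andb/true]_(i in u) Lf (Ra a) (Ea a) i x.
Proof.
have hm : {morph (fun p => ev p x) : p q / rmul p q >-> andb p q}.
  by move=> p1 q1; apply: ev_rmul.
rewrite /act (big_morph (fun p => ev p x) hm (@ev_rone m x)).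
by under eq_bigr do rewrite ev_act_var.
Qed.

Definition flip m (x : {set 'I_m}) k := [set j | (j \in x) (+) (j == k)].

Lemma big_flip m (P : pred 'I_m) (x : {set 'I_m}) k :
  \big[addb/false]_(j | P j) (j \in flip x k) =
  \big[addb/false]_(j | P j) (j \in x) (+) P k.
Proof.
under eq_bigr do rewrite inE.
rewrite big_split /=; congr (_ (+) _).
rewrite big_mkcond (bigD1 k) //= eqxx big1 => [|j /negbTE ->]; last by case: (P j).
by rewrite addbF; case: (P k).
Qed.

Lemma Lf_flip m R e (i : 'I_m) (x : {set 'I_m}) k :
  Lf R e i (flip x k) = Lf R e i x (+) ((i == k) (+) ((k < i)%N && R i k)).
Proof.
rewrite /Lf /phi big_flip inE.
set B := \big[addb/false]_(j | _) _.
by case: (i \in x); case: (i == k); case: B; case: (e i); case: ((k < i)%N && R i k).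
Qed.

Lemma solve m (R : 'I_m -> 'I_m -> bool) e t : exists x, forall i, Lf R e i x = t i.
Proof.
suff: forall n, exists x : {set 'I_m},
   (forall j, j \in x -> (j < n)%N) /\ forall i : 'I_m, (i < n)%N -> Lf R e i x = t i.
  move=> /(_ m) [x [_ H]]; exists x => i; exact: H.
elim=> [|n [x [Hx Ht]]].
  by exists set0; split => // j; rewrite inE.
case: (ltnP n m) => [lt | ge]; last first.
  exists x; split => [j /Hx /ltnW //|i _]; apply: Ht.
  exact: leq_trans (ltn_ord i) ge.
pose k := Ordinal lt.
pose v := t k (+) phi R e k x.
exists (x :|: [set j | (j == k) && v]); split.
  move=> j; rewrite !inE => /orP[/Hx /ltnW //|/andP[/eqP -> _]].
  by [].
have hphi : forall i : 'I_m, (i <= n)%N ->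
    phi R e i (x :|: [set j | (j == k) && v]) = phi R e i x.
  move=> i lei; rewrite /phi; congr (_ (+) _); apply: eq_bigr => j /andP[ji _].
  rewrite !inE; case: eqP => [Ej|_]; last by rewrite orbF.
  by move: ji; rewrite Ej /= ltnNge lei.
move=> i; rewrite ltnS leq_eqVlt => /orP[/eqP Ei | lti].
  have -> : i = k by apply: val_inj.
  rewrite /Lf hphi // !inE eqxx /=.
  have -> : (k \in x) = false by apply/negbTE/negP => /Hx; rewrite ltnn.
  by rewrite /v /=; case: (t k); case: (phi R e k x).
rewrite /Lf hphi; last exact: ltnW.
rewrite !inE.
have -> : (i == k) = false by apply/negbTE/negP => /eqP Ei; move: lti; rewrite Ei ltnn.
by rewrite orbF; apply: Ht.
Qed.

Lemma brute (da db dc dd : bool) : exists ta tb tc td : bool,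
  ((ta && tb) (+) (tc && td)) &&
  (((ta (+) da) && (tb (+) db)) (+) ((tc (+) dc) && (td (+) dd))).
Proof.
case: da; case: db; case: dc; case: dd;
  solve [ (exists true + exists false); (exists true + exists false);
          (exists true + exists false); (exists true + exists false); by [] ].
Qed.

Lemma witness m (R : 'I_m -> 'I_m -> bool) (e : 'I_m -> bool) (a b c d : 'I_m) :
  b != a -> c != a -> c != b -> d != a -> d != b -> d != c ->
  forall k, exists x,
    ((Lf R e a x && Lf R e b x) (+) (Lf R e c x && Lf R e d x)) &&
    ((Lf R e a (flip x k) && Lf R e b (flip x k)) (+)
     (Lf R e c (flip x k) && Lf R e d (flip x k))).
Proof.
move=> ba ca cb da db dc k.
have [ta [tb [tc [td H]]]] := brute ((a == k) (+) ((k < a)%N && R a k))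
  ((b == k) (+) ((k < b)%N && R b k)) ((c == k) (+) ((k < c)%N && R c k))
  ((d == k) (+) ((k < d)%N && R d k)).
have [x Hx] := solve R e (fun i => if i == a then ta else if i == b then tb
                                  else if i == c then tc else td).
exists x; rewrite !Lf_flip !Hx eqxx.
by rewrite (negbTE ba) (negbTE ca) (negbTE cb) (negbTE da) (negbTE db) (negbTE dc) !eqxx.
Qed.

Lemma lta_e m (g : {set 'I_m}) (a : lta m) (i : 'I_m) : a \in LTA_g g -> i \notin g -> a.2 i = false.
Proof.
rewrite inE => /andP[_ /andP[/forallP H1 _]] ig.
by move: (H1 i) => /implyP /(_ ig) /eqP.
Qed.

Lemma lta_b m (g : {set 'I_m}) (a : lta m) (i j : 'I_m) : a \in LTA_g g -> (j < i)%N -> a.1 i j ->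
  (i \in g) && (j \notin g).
Proof.
rewrite inE => /andP[_ /andP[_ /forallP H2]] ji aij.
move: (H2 i) => /forallP /(_ j) /implyP; rewrite ji aij /=.
by case: (i \in g); case: (j \in g) => // /(_ isT).
Qed.

Lemma memD_eq m (h x y : {set 'I_m}) (j : 'I_m) : x :\: h = y :\: h -> j \notin h ->
  (j \in x) = (j \in y).
Proof. by move/setP => /(_ j); rewrite !inE => E /negbTE jh; move: E; rewrite jh. Qed.

Lemma phi_dep m (g h : {set 'I_m}) (a : lta m) (i : 'I_m) (x y : {set 'I_m}) :
  a \in LTA_g g -> h \subset g -> x :\: h = y :\: h ->
  phi (Ra a) (Ea a) i x = phi (Ra a) (Ea a) i y.
Proof.
move=> Ha hg Exy; rewrite /phi; congr (_ (+) _); apply: eq_bigr => j /andP[ji aij].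
have /andP[_ jg] := lta_b Ha ji aij.
have jh : j \notin h by apply: contra jg; apply/subsetP.
exact: memD_eq Exy jh.
Qed.

Lemma ev_act_dep m (g h : {set 'I_m}) (a : lta m) (u x y : {set 'I_m}) :
  a \in LTA_g g -> h \subset g -> (forall i, i \in u -> i \notin h) ->
  x :\: h = y :\: h -> ev (act a u) x = ev (act a u) y.
Proof.
move=> Ha hg uh Exy; rewrite !ev_act; apply: eq_bigr => i iu.
by rewrite /Lf (memD_eq Exy (uh i iu)) (phi_dep i Ha hg Exy).
Qed.

Definition yset m (h : {set 'I_m}) (a : lta m) x :=
  (x :\: h) :|: [set i in h | ~~ phi (Ra a) (Ea a) i x].

Lemma ysetD m (h : {set 'I_m}) a x : yset h a x :\: h = x :\: h.
Proof. by apply/setP => j; rewrite /yset !inE; case: (j \in h); rewrite /= ?orbF. Qed.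

Lemma mem_yset m (h : {set 'I_m}) a x (i : 'I_m) : i \in h ->
  (i \in yset h a x) = ~~ phi (Ra a) (Ea a) i x.
Proof. by move=> ih; rewrite /yset !inE ih. Qed.

Lemma Py m (h : {set 'I_m}) a x : a \in LTA_g h -> ev (act a h) (yset h a x) = true.
Proof.
move=> Ha; rewrite ev_act big1 // => i ih.
rewrite /Lf (phi_dep i Ha (subxx h) (ysetD h a x)) mem_yset //.
by case: (phi _ _ i x).
Qed.

Lemma Pagree m (h : {set 'I_m}) a1 a2 x : a1 \in LTA_g h -> a2 \in LTA_g h ->
  ev (act a2 h) (yset h a1 x) = true ->
  forall i, i \in h -> phi (Ra a1) (Ea a1) i x = phi (Ra a2) (Ea a2) i x.
Proof.
move=> H1 H2 + i ih; rewrite ev_act (bigD1 i) //= => /andP[+ _].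
rewrite /Lf (phi_dep i H2 (subxx h) (ysetD h a1 x)) mem_yset //.
by case: (phi (Ra a1) _ i x); case: (phi (Ra a2) _ i x).
Qed.

Lemma half m (h : {set 'I_m}) a1 a2 (Q1 Q2 : {set 'I_m} -> bool) :
  a1 \in LTA_g h -> a2 \in LTA_g h ->
  (forall x y, x :\: h = y :\: h -> Q1 x = Q1 y) ->
  (forall x y, x :\: h = y :\: h -> Q2 x = Q2 y) ->
  (forall x, ev (act a1 h) x && Q1 x = ev (act a2 h) x && Q2 x) ->
  forall x, Q1 x -> Q2 x /\
    forall i, i \in h -> phi (Ra a1) (Ea a1) i x = phi (Ra a2) (Ea a2) i x.
Proof.
move=> H1 H2 d1 d2 E x q1.
have q1y : Q1 (yset h a1 x) by rewrite (d1 _ x (ysetD h a1 x)).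
have := E (yset h a1 x); rewrite Py // q1y /= => /esym/andP[P2 Q2y].
split; first by rewrite -(d2 _ x (ysetD h a1 x)).
exact: Pagree P2.
Qed.

Lemma bool_aux1 (B1 B2 c1 c2 j1 j2 : bool) : B1 (+) c1 = B2 (+) c2 ->
  (B1 (+) j1) (+) c1 = (B2 (+) j2) (+) c2 -> j1 = j2.
Proof. by case: B1; case: B2; case: c1; case: c2; case: j1; case: j2. Qed.

Lemma bool_aux2 (B c1 c2 : bool) : B (+) c1 = B (+) c2 -> c1 = c2.
Proof. by case: B; case: c1; case: c2. Qed.

Lemma aff m (k0 : 'I_m) (J1 J2 : pred 'I_m) c1 c2 (Q : {set 'I_m} -> bool) :
  (forall k, exists x, Q x && Q (flip x k)) ->
  (forall x : {set 'I_m}, Q x -> \big[addb/false]_(j | J1 j) (j \in x) (+) c1 =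
                    \big[addb/false]_(j | J2 j) (j \in x) (+) c2) ->
  forall x : {set 'I_m}, \big[addb/false]_(j | J1 j) (j \in x) (+) c1 =
            \big[addb/false]_(j | J2 j) (j \in x) (+) c2.
Proof.
move=> W E.
have EJ : forall k, J1 k = J2 k.
  move=> k; have [x /andP[q qf]] := W k.
  have := E _ qf; rewrite !big_flip; exact: bool_aux1 (E x q).
have [x0 /andP[q0 _]] := W k0.
have Ec : c1 = c2.
  move: (E x0 q0); rewrite (eq_bigl _ _ EJ); exact: bool_aux2.
by move=> x; rewrite (eq_bigl _ _ EJ) Ec.
Qed.

Lemma Lf_ext m R R' e e' (i : 'I_m) x :
  (forall j, R i j = R' i j) -> e i = e' i -> Lf R e i x = Lf R' e' i x.
Proof.
move=> HR He; rewrite /Lf /phi He; congr (_ (+) (_ (+) _)).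
by apply: eq_bigl => j; rewrite HR.
Qed.

Lemma core m (f g h : {set 'I_m}) (a b c d : 'I_m) (a1 a2 b1 b2 c1 c2 : lta m) :
  h \subset f -> h \subset g ->
  f :\: h = [set a; b] -> g :\: h = [set c; d] -> b != a -> d != c ->
  c \notin f -> d \notin f ->
  a1 \in LTA_g h -> a2 \in LTA_g h -> b1 \in LTA_g f -> b2 \in LTA_g f ->
  c1 \in LTA_g g -> c2 \in LTA_g g ->
  rmul (act a1 h) (radd (act b1 (f :\: h)) (act c1 (g :\: h))) =
  rmul (act a2 h) (radd (act b2 (f :\: h)) (act c2 (g :\: h))) ->
  act a1 h = act a2 h /\
  radd (act b1 (f :\: h)) (act c1 (g :\: h)) = radd (act b2 (f :\: h)) (act c2 (g :\: h)).
Proof.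
move=> hf hg Ef Eg ba dc cf df A1 A2 B1 B2 C1 C2 Heq.
pose Q1 x := ev (radd (act b1 (f :\: h)) (act c1 (g :\: h))) x.
pose Q2 x := ev (radd (act b2 (f :\: h)) (act c2 (g :\: h))) x.
have E : forall x, ev (act a1 h) x && Q1 x = ev (act a2 h) x && Q2 x.
  by move=> x; rewrite /Q1 /Q2 -!ev_rmul Heq.
have uh : forall (u : {set 'I_m}) i, i \in u :\: h -> i \notin h.
  by move=> u i; rewrite inE => /andP[].
have dQ : forall bb cc, bb \in LTA_g f -> cc \in LTA_g g ->
    forall x y, x :\: h = y :\: h ->
    ev (radd (act bb (f :\: h)) (act cc (g :\: h))) x =
    ev (radd (act bb (f :\: h)) (act cc (g :\: h))) y.
  move=> bb cc Hb Hc x y Exy; rewrite !ev_radd.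
  by rewrite (ev_act_dep Hb hf (uh f) Exy) (ev_act_dep Hc hg (uh g) Exy).
have H12 := half A1 A2 (dQ _ _ B1 C1) (dQ _ _ B2 C2) E.
have H21 := half A2 A1 (dQ _ _ B2 C2) (dQ _ _ B1 C1) (fun x => esym (E x)).
have Qeq : forall x, Q1 x = Q2 x.
  by move=> x; apply/idP/idP => [/(H12 x) [] | /(H21 x) []].
split; last exact: ev_inj Qeq.
apply: ev_inj => x; rewrite !ev_act; apply: eq_bigr => i ih.
rewrite /Lf; congr (_ (+) _).
have aE : a \in f :\: h by rewrite Ef !inE eqxx.
have bE : b \in f :\: h by rewrite Ef !inE eqxx orbT.
have cu : c \notin f :\: h by rewrite inE negb_and cf orbT.
have du : d \notin f :\: h by rewrite inE negb_and df orbT.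
pose R i j := if i \in f :\: h then Ra b1 i j else Ra c1 i j.
pose e i := if i \in f :\: h then Ea b1 i else Ea c1 i.
have QL : forall x, Q1 x = (Lf R e a x && Lf R e b x) (+) (Lf R e c x && Lf R e d x).
  move=> y; rewrite /Q1 ev_radd !ev_act Ef Eg.
  rewrite !big_setU1 ?inE 1?eq_sym // !big_set1 /=.
  rewrite (@Lf_ext _ R (Ra b1) e (Ea b1) a) => [|j|]; last 2 first.
  - by rewrite /R aE.
  - by rewrite /e aE.
  rewrite (@Lf_ext _ R (Ra b1) e (Ea b1) b) => [|j|]; last 2 first.
  - by rewrite /R bE.
  - by rewrite /e bE.
  rewrite (@Lf_ext _ R (Ra c1) e (Ea c1) c) => [|j|]; last 2 first.
  - by rewrite /R (negbTE cu).
  - by rewrite /e (negbTE cu).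
  rewrite (@Lf_ext _ R (Ra c1) e (Ea c1) d) => [|j|]; last 2 first.
  - by rewrite /R (negbTE du).
  - by rewrite /e (negbTE du).
  by [].
have ca : c != a by apply: contraNneq cu => ->.
have cb : c != b by apply: contraNneq cu => ->.
have da : d != a by apply: contraNneq du => ->.
have db : d != b by apply: contraNneq du => ->.
apply: (@aff m a _ _ _ _ Q1).
  move=> k; have [y Hy] := witness R e ba ca cb da db dc k.
  by exists y; rewrite !QL.
by move=> y /(H12 y) [_ /(_ i ih)].
Qed.

Theorem lemma3 (m : nat) (I : {set mono m}) (f g : mono m) :
  (1 <= m)%N ->
  decreasing I ->
  f \in I -> g \in I ->
  mdeg f = (\max_(u in I) mdeg u)%N ->
  mdeg g = (\max_(u in I) mdeg u)%N ->
  (mdeg (mgcd f g) + 2 = \max_(u in I) mdeg u)%N ->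
  let h := mgcd f g in
  #|mulS (actS (LTA_g h) h)
         (addS (actS (LTA_g f) (mdiv f h)) (actS (LTA_g g) (mdiv g h)))| =
  (#|actS (LTA_g h) h| *
   #|addS (actS (LTA_g f) (mdiv f h)) (actS (LTA_g g) (mdiv g h))|)%N.
Proof.
move=> _ _ _ _ df dg dh h.
have hf : h \subset f by rewrite /h /mgcd subsetIl.
have hg : h \subset g by rewrite /h /mgcd subsetIr.
have cf2 : #|f :\: h| == 2.
  rewrite cardsD /h /mgcd setIA setIid.
  move: df dh; rewrite /mdeg /mgcd => -> <-.
  by rewrite addKn.
have cg2 : #|g :\: h| == 2.
  rewrite cardsD /h /mgcd setICA setIid.
  move: dg dh; rewrite /mdeg /mgcd => -> <-.
  by rewrite addKn.
have /cards2P [a [b [ab Ef]]] := cf2.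
have /cards2P [c [d [cd Eg]]] := cg2.
have notf : forall k, k \in g :\: h -> k \notin f.
  move=> k; rewrite /h /mgcd !inE => /andP[+ kg]; rewrite kg andbT.
  by apply: contra => kf.
have cf : c \notin f by apply: notf; rewrite Eg !inE eqxx.
have df' : d \notin f by apply: notf; rewrite Eg !inE eqxx orbT.
rewrite /mdiv /mulS curry_imset2X card_in_imset ?cardsX //.
move=> [s1 t1] [s2 t2]; rewrite !in_setX /= => /andP[S1 T1] /andP[S2 T2].
case/imsetP: S1 => a1 A1 ->; case/imset2P: T1 => q1 r1 Q1 R1 ->.
case/imsetP: Q1 => b1 B1 ->; case/imsetP: R1 => c1 C1 ->.
case/imsetP: S2 => a2 A2 ->; case/imset2P: T2 => q2 r2 Q2 R2 ->.
case/imsetP: Q2 => b2 B2 ->; case/imsetP: R2 => c2 C2 -> /= E.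
have ba : b != a by rewrite eq_sym.
have dc : d != c by rewrite eq_sym.
have [-> ->] := core hf hg Ef Eg ba dc cf df' A1 A2 B1 B2 C1 C2 E.
by [].
Qed.
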